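(* Let $b\ge0$, $c\ge0$, $1\le a\le c+1$, and $f\in\mathbb{F}_q[x_1,\dots,x_c]$. Then $\delta_{a;b}(f)$ is a polynomial if and only if for all $c_1,\dots,c_{a-1}\in\mathbb{F}_q$ the following identity of polynomials holds, with $y=\sum_{j=1}^{a-1}c_jx_j$: $$\sum_{i=1}^{a-1}c_i\,x_i^{q^b}\,f(x_1,\dots,x_{i-1},x_{i+1},\dots,x_{a-1},y,x_{a+1},\dots,x_{c+1})=\Big(\sum_{j=1}^{a-1}c_jx_j^{q^b}\Big)f(x_1,\dots,x_{a-1},x_{a+1},\dots,x_{c+1}).$$
   Context: $q$ is a power of a prime. Delta operators: for integers $b\ge0$, $c\ge0$, $1\le a\le c+1$, $\delta_{a;b}:\mathbb{F}_q(x_1,\dots,x_c)\to\mathbb{F}_q(x_1,\dots,x_{c+1})$ sends $f$ to $N/L(x_1,\dots,x_a)$, where $N$ is the $a\times a$ determinant whose $t$-th row is $(x_1^{q^{t-1}},\dots,x_a^{q^{t-1}})$ for $t=1,\dots,a-1$ and whose last row is $(x_1^{q^b}f(\hat x_1),\dots,x_a^{q^b}f(\hat x_a))$, with $f(\hat x_i)=f(x_1,\dots,x_{i-1},x_{i+1},\dots,x_{c+1})$, and $L(x_1,\dots,x_a)=\det(x_j^{q^{t-1}})_{1\le t,j\le a}$. *)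

(* Defs.v *)
From HB Require Import structures.
From mathcomp Require Import all_boot all_algebra all_field.
From mathcomp Require Import fraction.
From mathcomp.multinomials Require Import mpoly.

Set Implicit Arguments. Unset Strict Implicit. Unset Printing Implicit Defensive.
Import GRing.Theory.
Local Open Scope ring_scope.

Notation "x %:F" := (@FracField.tofrac _ x).

(* Variables x_1, ..., x_{c+1} are 'X_0, ..., 'X_c (0-indexed). *)

(* Substitution tuple for f(\hat x_i): the c variables of f are sent to
   x_1,...,x_{i-1},x_{i+1},...,x_{c+1} (i 0-indexed here). *)
Definition hat_tuple (F : finFieldType) (c : nat) (i : 'I_c.+1)
  : c.-tuple {mpoly F[c.+1]} :=
  [tuple 'X_(inord (bump i j)) | j < c].

Definition fhat (F : finFieldType) (c : nat) (f : {mpoly F[c]}) (i : 'I_c.+1)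
  : {mpoly F[c.+1]} := f \mPo hat_tuple F i.

Definition delta_num (F : finFieldType) (c a b : nat) (f : {mpoly F[c]})
  : {mpoly F[c.+1]} :=
  \det (\matrix_(t < a, j < a)
     (if (t < a.-1)%N then ('X_(inord j : 'I_c.+1)) ^+ (#|F| ^ t)
      else ('X_(inord j : 'I_c.+1)) ^+ (#|F| ^ b) * fhat f (inord j))).

Definition moore_det (F : finFieldType) (c a : nat) : {mpoly F[c.+1]} :=
  \det (\matrix_(t < a, j < a) ('X_(inord j : 'I_c.+1)) ^+ (#|F| ^ t)).

Definition delta (F : finFieldType) (c a b : nat) (f : {mpoly F[c]})
  : {fraction {mpoly F[c.+1]}} :=
  (delta_num a b f)%:F / (moore_det F c a)%:F.

Definition is_poly_frac (R : idomainType) (r : {fraction R}) : Prop :=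
  exists g : R, r = g%:F.

Definition y_lin (F : finFieldType) (c a : nat) (cs : 'I_a.-1 -> F)
  : {mpoly F[c.+1]} :=
  \sum_(j < a.-1) cs j *: 'X_(inord j : 'I_c.+1).

(* f(x_1,..,x_{i-1},x_{i+1},..,x_{a-1},y,x_{a+1},..,x_{c+1}) :
   f(\hat x_i) with the occurrence of x_a replaced by y (i 0-indexed, i < a-1). *)
Definition fhat_y (F : finFieldType) (c a : nat) (f : {mpoly F[c]})
  (y : {mpoly F[c.+1]}) (i : 'I_c.+1) : {mpoly F[c.+1]} :=
  f \mPo [tuple (if bump i j == a.-1 then y else 'X_(inord (bump i j)))
          | j < c].

(* Main.v *)
Require Import Defs.
From HB Require Import structures.
From mathcomp Require Import all_boot all_algebra all_field.
From mathcomp Require Import fraction.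
From mathcomp.multinomials Require Import mpoly.
From mathcomp Require Import zify.
Import GRing.Theory.
Local Open Scope ring_scope.
Set Implicit Arguments. Unset Strict Implicit. Unset Printing Implicit Defensive.

Section Gen.
Variable F : finFieldType.

Lemma mpoly_rmorph_eq m (S : comNzRingType) (g1 g2 : {rmorphism {mpoly F[m]} -> S}) :
  (forall x : F, g1 x%:MP = g2 x%:MP) -> (forall i, g1 'X_i = g2 'X_i) ->
  forall p, g1 p = g2 p.
Proof.
move=> hC hX p; rewrite (mpolyE p) !rmorph_sum; apply: eq_bigr => mm _.
rewrite -mul_mpolyC !rmorphM hC; congr (_ * _).
by rewrite mpolyXE_id !rmorph_prod; apply: eq_bigr => i _; rewrite !rmorphXn hX.
Qed.

Lemma comp_mpolyA m k l (p : {mpoly F[m]}) (t : m.-tuple {mpoly F[k]})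
   (t' : k.-tuple {mpoly F[l]}) :
  (p \mPo t) \mPo t' = p \mPo [tuple (tnth t i) \mPo t' | i < m].
Proof.
have := @mpoly_rmorph_eq m _ (comp_mpoly t' \o comp_mpoly t)
   (comp_mpoly [tuple (tnth t i) \mPo t' | i < m]); apply => [x|i] /=.
  by rewrite !comp_mpolyC.
by rewrite !comp_mpolyXU -!tnth_nth tnth_mktuple.
Qed.

Lemma frob_pnat m t : [pchar {mpoly F[m]}].-nat (#|F| ^ t)%N.
Proof.
have [p pr pch] := finPcharP F.
have pchm : p \in [pchar {mpoly F[m]}] := rmorph_pchar (@mpolyC m F) pch.
have -> : #|F| = (p ^ logn p #|pPrimeCharType pch|)%N by exact: (card_pprimeChar pch).
by rewrite -expnM pnatX (pnatE _ pr) pchm.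
Qed.

Lemma frobD m t (x y : {mpoly F[m]}) :
  (x + y) ^+ (#|F| ^ t)%N = x ^+ (#|F| ^ t)%N + y ^+ (#|F| ^ t)%N.
Proof. exact: exprDn_pchar (frob_pnat m t). Qed.

Lemma expf_cardn (x : F) t : x ^+ (#|F| ^ t)%N = x.
Proof. by elim: t => [|t IH]; rewrite ?expr1 // expnSr exprM IH expf_card. Qed.

Lemma frob_sum m t k (cs : 'I_k -> F) (x : 'I_k -> {mpoly F[m]}) :
  (\sum_(j < k) cs j *: x j) ^+ (#|F| ^ t)%N = \sum_(j < k) cs j *: x j ^+ (#|F| ^ t)%N.
Proof.
elim/big_rec2: _ => [|j u v _ <-].
  have q0 : (0 < #|F|)%N by apply/card_gt0P; exists 0.
  by rewrite expr0n expn_eq0 eqn0Ngt q0.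
by rewrite frobD exprZn expf_cardn.
Qed.

End Gen.
Lemma det_colop (R : comNzRingType) m (A : 'M[R]_m) (i0 : 'I_m) (d : 'I_m -> R) :
  \det A = \det (\matrix_(r, j) if j == i0
     then A r i0 - \sum_(l < m | (l < i0)%N) d l * A r l else A r j).
Proof.
pose N : 'M[R]_m := \matrix_(l, j) (((j == i0) && (l < i0)%N)%:R * - d l).
have -> : (\matrix_(r, j) if j == i0
     then A r i0 - \sum_(l < m | (l < i0)%N) d l * A r l else A r j) = A *m (1%:M + N).
  apply/matrixP => r j; rewrite mulmxDr mulmx1 !mxE.
  case: eqP => [->|nj].
    congr (_ + _); rewrite -sumrN big_mkcond /=; apply: eq_bigr => l _.
    rewrite mxE eqxx /=; case: (l < i0)%N; rewrite ?mul1r ?mul0r ?mulr0 //.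
    by rewrite mulrN mulrC.
  rewrite big1 ?addr0 // => l _; rewrite mxE.
  by move/eqP/negbTE: nj => ->; rewrite /= mul0r mulr0.
have trE : is_trig_mx (1%:M + N)^T.
  apply/is_trig_mxP => i j lij; rewrite !mxE.
  have -> : (j == i) = false by rewrite -val_eqE /= gtn_eqF.
  rewrite add0r.
  case: (i =P i0) => [ei|]; last by rewrite mul0r.
  by rewrite -ei ltnNge ltnW //= mul0r.
rewrite det_mulmx -[\det (1%:M + N)]det_tr (det_trig trE).
rewrite big1 ?mulr1 // => i _; rewrite !mxE eqxx; case: eqP => [->|]; rewrite ?ltnn /= ?mul0r ?addr0 //.
Qed.

Lemma det_col_single (R : comNzRingType) m (M : 'M[R]_m) (i0 r0 : 'I_m) :
  (forall r, r != r0 -> M r i0 = 0) -> \det M = M r0 i0 * cofactor M r0 i0.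
Proof.
move=> h; rewrite (expand_det_col _ i0) (bigD1 r0) //= big1 ?addr0 //.
by move=> r /h ->; rewrite mul0r.
Qed.

Section Moore.
Variables (F : finFieldType) (c : nat).
Local Notation n := c.+1.
Local Notation R := {mpoly F[n]}.
Local Notation q := #|F|.

Definition Xn (p : nat) : R := 'X_(inord p).
Definition mooreM k : 'M[R]_k := \matrix_(t < k, j < k) Xn j ^+ (q ^ t).
Definition LL k := \det (mooreM k).
Definition ext k (cs : {ffun 'I_k -> F}) (j : nat) : F := odflt 0 (omap cs (insub j)).
Definition w k (cs : {ffun 'I_k -> F}) : R := \sum_(j < k) cs j *: Xn j.
Definition sub (i : nat) (v : R) : R -> R :=
  comp_mpoly [tuple if val j == i then v else 'X_j | j < n].
Definition U (i : nat) : R -> {poly R} :=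
  mmap (polyC \o @mpolyC n F) (fun j : 'I_n => if val j == i then 'X else ('X_j)%:P).
Definition rs k := [seq w cs | cs : {ffun 'I_k -> F}].
Definition Q k : {poly R} := \prod_(x <- rs k) ('X - x%:P).

Lemma extE k (cs : {ffun 'I_k -> F}) (j : 'I_k) : ext cs j = cs j.
Proof. by rewrite /ext valK. Qed.

Lemma subX i v p : (p < n)%N -> sub i v (Xn p) = if p == i then v else Xn p.
Proof. move=> lp; rewrite /sub /Xn comp_mpolyXU -tnth_nth tnth_mktuple; have -> : val (inord p : 'I_n) = p by exact: inordK.
by []. Qed.

Lemma U_horner i v p : (U i p).[v] = sub i v p.
Proof.
have := @mpoly_rmorph_eq F n _ (horner_eval v \o U i) (comp_mpoly
   [tuple if val j == i then v else 'X_j | j < n]); apply => [x|j] /=.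
  by rewrite /U mmapC /= horner_evalE hornerC comp_mpolyC.
rewrite horner_evalE (comp_mpolyXU j) /U mmapX mmap1U -tnth_nth tnth_mktuple.
by case: eqP; rewrite ?hornerX ?hornerC.
Qed.

Lemma sub_id i p : (i < n)%N -> sub i (Xn i) p = p.
Proof.
move=> li; rewrite /sub -[RHS]comp_mpoly_id; congr comp_mpoly.
apply: eq_from_tnth => j; rewrite !tnth_mktuple.
by case: eqP => // <-; rewrite /Xn inord_val.
Qed.

Lemma U_X i p : (i < n)%N -> (U i p).[Xn i] = p.
Proof. by move=> li; rewrite U_horner sub_id. Qed.

Lemma UX i p : (p < n)%N -> U i (Xn p) = if p == i then 'X else (Xn p)%:P.
Proof.
move=> lp; rewrite /U /Xn mmapX mmap1U.
by have -> : val (inord p : 'I_n) = p by exact: inordK.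
Qed.

Lemma inord_eqn p j : (p < n)%N -> (j < n)%N -> ((inord p : 'I_n) == inord j) = (p == j).
Proof. by move=> lp lj; rewrite -val_eqE /= !inordK. Qed.

Lemma coef_Xn p j : (p < n)%N -> (j < n)%N -> (Xn p)@_U_(inord j) = (p == j)%:R.
Proof. by move=> lp lj; rewrite /Xn mcoeffXU inord_eqn. Qed.

Lemma coef_w k (cs : {ffun 'I_k -> F}) j : (k <= n)%N -> (j < n)%N ->
  (w cs)@_U_(inord j) = ext cs j.
Proof.
move=> lk lj; rewrite /w (raddf_sum (mcoeff _)).
under eq_bigr => l _ do rewrite /= mcoeffZ coef_Xn ?(leq_trans (ltn_ord l)) //.
rewrite /ext; case: insubP => [l0 _ <-|] /=.
  rewrite (bigD1 l0) //= eqxx mulr1 big1 ?addr0 // => l nl.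
  by rewrite (_ : (val l == val l0) = false) ?mulr0 //; apply/negbTE; rewrite val_eqE.
move=> njk; rewrite big1 // => l _.
by rewrite (_ : (val l == j) = false) ?mulr0 //; apply/negbTE/eqP => e;
  move: njk; rewrite -e ltn_ord.
Qed.

Lemma w_inj k : (k <= n)%N -> injective (@w k).
Proof.
move=> lk cs1 cs2 e; apply/ffunP => j.
have lj := leq_trans (ltn_ord j) lk.
by have := coef_w cs1 lk lj; rewrite e coef_w // !extE.
Qed.
Lemma Q_monic k : Q k \is monic.
Proof. exact: monic_prod_XsubC. Qed.

Lemma size_rs k : size (rs k) = (q ^ k)%N.
Proof. by rewrite /rs size_map -cardE card_ffun card_ord. Qed.

Lemma size_Q k : size (Q k) = (q ^ k).+1.
Proof. by rewrite /Q size_prod_XsubC size_rs. Qed.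

Lemma uniq_rs k : (k <= n)%N -> uniq (rs k).
Proof. by move=> lk; rewrite map_inj_uniq ?enum_uniq //; apply: w_inj. Qed.

Lemma Q_root k (cs : {ffun 'I_k -> F}) : (Q k).[w cs] = 0.
Proof.
by apply/eqP; rewrite -/(root _ _) root_prod_XsubC; apply: map_f; rewrite mem_enum.
Qed.

Lemma Qdiv k (H : {poly R}) : (k <= n)%N ->
  (forall cs : {ffun 'I_k -> F}, H.[w cs] = 0) -> H = H %/ Q k * Q k.
Proof.
move=> lk hH; have E := Pdiv.IdomainMonic.divp_eq (Q_monic k) H.
set r := H %% Q k in E.
suff r0 : r = 0 by rewrite {1}E r0 addr0.
have rr : all (root r) (rs k).
  apply/allP => x /mapP [cs _ ->]; apply/eqP.
  have := hH cs; rewrite {1}E hornerD hornerM Q_root mulr0 add0r; exact.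
apply/eqP; apply: contraT => nr.
have := max_poly_roots nr rr (uniq_rs lk).
have : (size r < size (Q k))%N by rewrite ltn_modp monic_neq0 // Q_monic.
by rewrite size_Q size_rs ltnS => h1 h2; move: (leq_trans h2 h1); rewrite ltnn.
Qed.
Lemma subM i v : {morph sub i v : x y / x * y}.
Proof. by move=> x y; rewrite /sub rmorphM. Qed.
Lemma subXn i v e : {morph sub i v : x / x ^+ e}.
Proof. by move=> x; rewrite /sub rmorphXn. Qed.
Lemma subB i v : {morph sub i v : x y / x - y}.
Proof. by move=> x y; rewrite /sub rmorphB. Qed.
Lemma subZ i v (a : F) x : sub i v (a *: x) = a *: sub i v x.
Proof. by rewrite /sub comp_mpolyZ. Qed.
Lemma sub_sum i v k (G : 'I_k -> R) : sub i v (\sum_(j < k) G j) = \sum_(j < k) sub i v (G j).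
Proof. by rewrite /sub rmorph_sum. Qed.
Lemma sub_det i v k (M : 'M[R]_k) : sub i v (\det M) = \det (map_mx (sub i v) M).
Proof. by rewrite /sub -det_map_mx. Qed.
Lemma U_det i k (M : 'M[R]_k) : U i (\det M) = \det (map_mx (U i) M).
Proof. by rewrite /U -det_map_mx. Qed.
Lemma UXn i e x : U i (x ^+ e) = U i x ^+ e.
Proof. by rewrite /U rmorphXn. Qed.
Lemma UM i x y : U i (x * y) = U i x * U i y.
Proof. by rewrite /U rmorphM. Qed.

Lemma cofactor_polyC k (M : 'M[R]_k) t j : cofactor (map_mx polyC M) t j = (cofactor M t j)%:P.
Proof. by rewrite /cofactor -map_col' -map_row' det_map_mx rmorphM rmorph_sign. Qed.

Lemma q_gt1 : (1 < q)%N.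
Proof. exact: finNzRing_gt1. Qed.

Lemma LL_root k (cs : {ffun 'I_k -> F}) : (k < n)%N -> sub k (w cs) (LL k.+1) = 0.
Proof.
move=> lk; rewrite /LL sub_det.
  rewrite (det_colop _ ord_max (fun l => (ext cs l)%:MP)).
  rewrite (expand_det_col _ ord_max) big1 // => r _.
  rewrite !mxE eqxx [X in X * _](_ : _ = 0) ?mul0r //.
  under eq_bigr => l _ do rewrite !mxE.
  rewrite -(big_ord_widen k.+1 (fun l => (ext cs l)%:MP * sub k (w cs) (Xn l ^+ (q ^ r))) (leqnSn k)).
  rewrite subXn subX // eqxx /w frob_sum; apply/eqP; rewrite subr_eq0; apply/eqP.
  apply: eq_bigr => j _; rewrite extE subXn subX ?(leq_trans (ltn_ord j)) 1?ltnW //.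
  by rewrite (ltn_eqF (ltn_ord j)) mul_mpolyC.
Qed.

Lemma LL_rec k : (k < n)%N -> LL k.+1 = LL k * (Q k).[Xn k].
Proof.
move=> lk.
pose M := mooreM k.+1.
pose P := U k (LL k.+1).
have Pw : forall cs : {ffun 'I_k -> F}, P.[w cs] = 0.
  by move=> cs; rewrite /P U_horner LL_root.
have vl : forall j : 'I_k, val (lift ord_max j) = j.
  by move=> j; rewrite /= /bump leqNgt ltn_ord.
have PE : P = \sum_(t < k.+1) (cofactor M t ord_max)%:P * 'X^(q ^ t).
  rewrite /P /LL U_det (expand_det_col _ ord_max); apply: eq_bigr => t _.
  rewrite mxE /mooreM mxE UXn UX // eqxx mulrC; congr (_ * _).
  rewrite -cofactor_polyC /cofactor; congr (_ * \det _).
  apply/matrixP => i j; rewrite !mxE UXn UX ?vl ?(leq_trans (ltn_ord j)) 1?ltnW //.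
  by rewrite (ltn_eqF (ltn_ord j)) rmorphXn.
have coefP : forall j, P`_j = \sum_(t < k.+1) cofactor M t ord_max * (j == q ^ t)%N%:R.
  by move=> j; rewrite PE coef_sum; apply: eq_bigr => t _; rewrite coefCM coefXn.
have C0 : cofactor M ord_max ord_max = LL k.
  rewrite /cofactor -signr_odd addnn odd_double expr0 mul1r /LL; congr (\det _).
  by apply/matrixP => i j; rewrite !mxE !vl.
have Pk : P`_(q ^ k)%N = LL k.
  rewrite coefP (bigD1 ord_max) //= eqxx mulr1 big1 ?addr0 // => t nt.
  rewrite eqn_exp2l ?q_gt1 // eq_sym.
  by rewrite -[k]/(val (@ord_max k)) val_eqE (negbTE nt) mulr0.
have sP : (size P <= (q ^ k).+1)%N.
  apply/leq_sizeP => j lj; rewrite coefP big1 // => t _.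
  case: eqP => [ej|]; rewrite ?mulr0 //; exfalso.
  have : (q ^ t <= q ^ k)%N by rewrite leq_exp2l ?q_gt1 // -ltnS.
  by rewrite -ej leqNgt lj.
have lkn : (k <= n)%N by apply: ltnW.
have PS := Qdiv lkn Pw.
set S := P %/ Q k in PS.
have SE : S = (LL k)%:P.
  have [S0|nS] := eqVneq S 0.
    by rewrite S0; move: Pk; rewrite PS S0 mul0r coef0 => <-; rewrite polyC0.
  have sS : (size S <= 1)%N.
    by move: sP; rewrite PS size_Mmonic ?Q_monic // size_Q addnS /= => h; rewrite -(leq_add2r (#|F| ^ k)%N) add1n.
  rewrite (size1_polyC sS); congr (_%:P).
  move: Pk; rewrite PS {1}(size1_polyC sS) coefCM.
  have -> : (Q k)`_(q ^ k)%N = 1 by have := monicP (Q_monic k); rewrite lead_coefE size_Q.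
  by rewrite mulr1.
by rewrite -(U_X (LL k.+1) lk) -/P PS hornerM SE hornerC.
Qed.
Lemma sub_LL i v k : (k <= i)%N -> (i < n)%N -> sub i v (LL k) = LL k.
Proof.
move=> ki iN; rewrite /LL sub_det; congr (\det _); apply/matrixP => t j.
have jk := leq_trans (ltn_ord j) ki.
by rewrite !mxE subXn subX ?(ltn_eqF jk) // (leq_trans jk (ltnW iN)).
Qed.

Lemma ext_out k (cs : {ffun 'I_k -> F}) j : (k <= j)%N -> ext cs j = 0.
Proof. by move=> kj; rewrite /ext insubF // ltnNge kj. Qed.

Lemma LL_neq0 k : (k <= n)%N -> LL k != 0.
Proof.
elim: k => [|k IH] lk; first by rewrite /LL det_mx00 oner_neq0.
rewrite LL_rec // mulf_neq0 ?IH 1?ltnW //.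
rewrite /Q horner_prod prodf_seq_neq0; apply/allP => x /mapP [cs _ ->] /=.
rewrite hornerXsubC subr_eq0; apply/negP => /eqP e.
have := coef_Xn lk lk; rewrite e (coef_w cs (ltnW lk) lk) eqxx.
by rewrite (@ext_out k cs k (leqnn k)) => /eqP; rewrite eq_sym oner_eq0.
Qed.

Lemma LL_dvd k (P : R) : (k <= n)%N ->
  (forall i, (i < k)%N -> forall cs : {ffun 'I_i -> F}, sub i (w cs) P = 0) ->
  exists G, P = LL k * G.
Proof.
elim: k P => [|k IH] P lk h; first by exists P; rewrite /LL det_mx00 mul1r.
have [H PH] := IH P (ltnW lk) (fun i li => h i (ltnW li)).
have Hw : forall cs : {ffun 'I_k -> F}, (U k H).[w cs] = 0.
  move=> cs; rewrite U_horner; have := h k (ltnSn k) cs.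
  rewrite PH subM sub_LL // => /eqP; rewrite mulf_eq0 (negbTE (LL_neq0 _)) ?(ltnW lk) //=.
  by move/eqP.
have HQ := Qdiv (ltnW lk) Hw.
exists ((U k H %/ Q k).[Xn k]).
rewrite LL_rec // PH -{1}(U_X H lk) {1}HQ hornerM.
by rewrite -!mulrA [_.[Xn k] * _]mulrC.
Qed.
Section Dmat.
Variables (k b : nat) (f : {mpoly F[c]}).

Definition Dmat : 'M[R]_k.+1 := \matrix_(t, j)
  (if (t < k)%N then Xn j ^+ (q ^ t) else Xn j ^+ (q ^ b) * fhat f (inord j)).

Definition Delta i (cs : {ffun 'I_i -> F}) : R :=
  (w cs) ^+ (q ^ b) * sub i (w cs) (fhat f (inord i))
  - \sum_(j < i) cs j *: (Xn j ^+ (q ^ b) * sub i (w cs) (fhat f (inord j))).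

Definition Dop (i : 'I_k.+1) (cs : {ffun 'I_i -> F}) : 'M[R]_k.+1 :=
  let M1 := map_mx (sub i (w cs)) Dmat in
  \matrix_(r, j) if j == i then M1 r i - \sum_(l < k.+1 | (l < i)%N) (ext cs l)%:MP * M1 r l
                 else M1 r j.

Lemma D_sub (i : 'I_k.+1) (cs : {ffun 'I_i -> F}) : (k < n)%N ->
  sub i (w cs) (\det Dmat) = Delta cs * cofactor (Dop cs) ord_max i.
Proof.
move=> kn; have iN : (i < n)%N by apply: leq_trans (ltn_ord i) kn.
have lN : forall l : 'I_k.+1, (l < n)%N by move=> l; apply: leq_trans (ltn_ord l) kn.
rewrite sub_det (det_colop _ i (fun l => (ext cs l)%:MP)) -/(Dop cs).
rewrite (@det_col_single _ _ _ i ord_max); last first.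
  move=> r nr; rewrite !mxE eqxx.
  have rk : (r < k)%N.
    move: (ltn_ord r); rewrite ltnS leq_eqVlt; case: eqP => // er; exfalso.
    by move: nr; rewrite -val_eqE /= er eqxx.
  under eq_bigr => l _ do rewrite !mxE rk.
  rewrite rk -(big_ord_widen k.+1 (fun l => (ext cs l)%:MP * sub i (w cs) (Xn l ^+ (q ^ r))) (ltnW (ltn_ord i))).
  rewrite subXn subX // eqxx /w frob_sum; apply/eqP; rewrite subr_eq0; apply/eqP.
  apply: eq_bigr => j _; rewrite extE subXn subX ?(ltn_eqF (ltn_ord j)) ?mul_mpolyC //.
  exact: ltn_trans (ltn_ord j) iN.
congr (_ * _); rewrite !mxE eqxx ltnn.
under eq_bigr => l _ do rewrite !mxE ltnn.
rewrite -(big_ord_widen k.+1 (fun l => (ext cs l)%:MP * sub i (w cs) (Xn l ^+ (q ^ b) * fhat f (inord l))) (ltnW (ltn_ord i))).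
rewrite subM subXn subX // eqxx /Delta; congr (_ - _).
apply: eq_bigr => j _; rewrite extE subM subXn subX ?(ltn_eqF (ltn_ord j)) ?mul_mpolyC //.
exact: ltn_trans (ltn_ord j) iN.
Qed.

Lemma Dop_cof (cs : {ffun 'I_k -> F}) : (k < n)%N ->
  cofactor (Dop (i := ord_max) cs) ord_max ord_max = LL k.
Proof.
move=> kn.
have vl : forall j : 'I_k.+1.-1, val (lift ord_max j) = j.
  by move=> j; rewrite /= /bump leqNgt ltn_ord.
rewrite /cofactor -signr_odd addnn odd_double expr0 mul1r /LL; congr (\det _).
apply/matrixP => t j; rewrite !mxE.
have -> : (lift ord_max j == ord_max) = false.
  by apply/negbTE; rewrite -val_eqE /= /bump leqNgt ltn_ord /= neq_ltn ltn_ord.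
rewrite !vl ltn_ord subXn subX ?(ltn_eqF (ltn_ord j)) //.
exact: ltn_trans (ltn_ord j) kn.
Qed.

End Dmat.
Lemma comp_Xn p (G : nat -> R) : (p < n)%N -> Xn p \mPo [tuple G j | j < n] = G p.
Proof.
move=> pn; rewrite /Xn comp_mpolyXU -tnth_nth tnth_mktuple.
by have -> : val (inord p : 'I_n) = p by exact: inordK.
Qed.

Lemma sub_tup i v p : sub i v p = p \mPo [tuple (if (j : nat) == i then v else Xn j) | j < n].
Proof.
rewrite /sub; congr (comp_mpoly _ _); apply: eq_from_tnth => j; rewrite !tnth_mktuple.
by rewrite /Xn inord_val.
Qed.

Lemma bump_lt j m : (m < c)%N -> (bump j m < n)%N.
Proof. by move=> mc; rewrite /bump; case: (j <= m)%N => /=; rewrite ?add0n ?add1n ?ltnS // ltnW. Qed.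

Lemma comp_tup (g : {mpoly F[c]}) (G : nat -> R) (t : n.-tuple R) :
  (g \mPo [tuple G m | m < c]) \mPo t = g \mPo [tuple G m \mPo t | m < c].
Proof.
rewrite comp_mpolyA; congr (comp_mpoly _ _); apply: eq_from_tnth => m.
by rewrite !tnth_mktuple.
Qed.

Lemma fhatE (g : {mpoly F[c]}) j : (j < n)%N -> fhat g (inord j) = g \mPo [tuple Xn (bump j m) | m < c].
Proof.
move=> jn; rewrite /fhat /hat_tuple; congr (comp_mpoly _ _); apply: eq_from_tnth => m.
by rewrite !tnth_mktuple /Xn inordK.
Qed.

Lemma fhat_yE (g : {mpoly F[c]}) a y j : (j < n)%N ->
  fhat_y a g y (inord j) = g \mPo [tuple (if bump j m == a.-1 then y else Xn (bump j m)) | m < c].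
Proof.
move=> jn; rewrite /fhat_y; congr (comp_mpoly _ _); apply: eq_from_tnth => m.
by rewrite !tnth_mktuple /Xn inordK.
Qed.

Lemma sub_fhat (g : {mpoly F[c]}) i v j : (j < n)%N ->
  sub i v (fhat g (inord j)) = g \mPo [tuple (if bump j m == i then v else Xn (bump j m)) | m < c].
Proof.
move=> jn; rewrite sub_tup fhatE // (comp_tup _ (fun m => Xn (bump j m))); congr (comp_mpoly _ _).
by apply: eq_from_tnth => m; rewrite !tnth_mktuple (comp_Xn (fun j : nat => if j == i then v else Xn j)) // bump_lt.
Qed.
Definition Cond k b (f : {mpoly F[c]}) : Prop := forall cs : 'I_k -> F,
  let y := @y_lin F c k.+1 cs in
  \sum_(i < k) cs i *: ('X_(inord i : 'I_c.+1) ^+ (#|F| ^ b) * fhat_y k.+1 f y (inord i))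
  = (\sum_(j < k) cs j *: ('X_(inord j : 'I_c.+1) ^+ (#|F| ^ b))) * fhat f (inord k).

Lemma Delta_k_eq k b f (cs : {ffun 'I_k -> F}) : (k < n)%N ->
  Delta b f cs = (\sum_(j < k) cs j *: (Xn j ^+ (q ^ b))) * fhat f (inord k)
     - \sum_(j < k) cs j *: (Xn j ^+ (q ^ b) * fhat_y k.+1 f (w cs) (inord j)).
Proof.
move=> kn; rewrite /Delta.
have -> : (w cs) ^+ (q ^ b) = \sum_(j < k) cs j *: (Xn j ^+ (q ^ b)).
  by rewrite /w frob_sum.
rewrite /Delta; congr (_ * _ - _).
  rewrite sub_fhat // fhatE //; congr (comp_mpoly _ _); apply: eq_from_tnth => m.
  by rewrite !tnth_mktuple eq_sym (negbTE (neq_bump _ _)).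
apply: eq_bigr => j _; rewrite sub_fhat ?fhat_yE //; exact: ltn_trans (ltn_ord j) kn.
Qed.

Lemma sum_ffun k (cs : 'I_k -> F) (G : 'I_k -> R) :
  \sum_(j < k) [ffun j => cs j] j *: G j = \sum_(j < k) cs j *: G j.
Proof. by apply: eq_bigr => j _; rewrite ffunE. Qed.

Lemma Cond_iff k b f : (k < n)%N ->
  Cond k b f <-> forall cs : {ffun 'I_k -> F}, Delta b f cs = 0.
Proof.
move=> kn; split.
  move=> h cs; rewrite Delta_k_eq //; apply/eqP; rewrite subr_eq0; apply/eqP.
  have := h (fun j => cs j) => /= <-.
  have -> : @y_lin F c k.+1 (fun j => cs j) = w cs by [].
  done.
move=> h cs /=; have := h [ffun j => cs j]; rewrite Delta_k_eq // => /eqP.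
rewrite subr_eq0 => /eqP E.
have -> : @y_lin F c k.+1 cs = w [ffun j => cs j].
  by rewrite /y_lin /w; apply: eq_bigr => j _; rewrite ffunE.
apply: (etrans _ (etrans (esym E) _)).
  by apply: eq_bigr => j _; rewrite ffunE.
by congr (_ * _); apply: eq_bigr => j _; rewrite ffunE.
Qed.
Lemma bumpE h x : bump h x = if (h <= x)%N then x.+1 else x.
Proof. by rewrite /bump; case: leqP. Qed.

Ltac ifs := repeat match goal with
  | |- context [if ?b then _ else _] =>
     lazymatch b with
     | context [if _ then _ else _] => fail
     | _ => let H := fresh "H" in case H: b
     end
  end.

Ltac finish := first [ by [] | (exfalso; lia) | (congr (_ _); lia) ].

Definition mv (i' k m : nat) : nat :=
  if (m < i')%N then m else if (m < k.-1)%N then m.+1 else if m == k.-1 then i' else m.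

Lemma symB k (f : {mpoly F[c]}) i' (G : nat -> R) : (k < n)%N -> (i' < k)%N ->
  f \mPo [tuple (if bump i' m == k then Xn i' else Xn (bump i' m)) | m < c]
    = f \mPo [tuple Xn (bump k m) | m < c] ->
  f \mPo [tuple G (mv i' k m) | m < c] = f \mPo [tuple G m | m < c].
Proof.
move=> kn ik hA.
pose rfun p := if (p < k)%N then G p else if p == k then 0 else G p.-1.
pose r := [tuple rfun p | p < n].
have rX : forall p, (p < n)%N -> Xn p \mPo r = rfun p := fun p h => comp_Xn rfun h.
have := congr1 (comp_mpoly r) hA.
rewrite (comp_tup f (fun m => if bump i' m == k then Xn i' else Xn (bump i' m)) r).
rewrite (comp_tup f (fun m => Xn (bump k m)) r) => E.
have e1 : [tuple G (mv i' k m) | m < c] =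
   [tuple (if bump i' m == k then Xn i' else Xn (bump i' m)) \mPo r | m < c].
  apply: eq_from_tnth => m; rewrite !tnth_mktuple (fun_if (comp_mpoly r)).
  have mc := ltn_ord m.
  rewrite !rX ?bump_lt //; last by apply: ltn_trans ik kn.
  rewrite /rfun /mv !bumpE; clear E hA rX r; ifs; finish.
have e0 : [tuple G m | m < c] = [tuple Xn (bump k m) \mPo r | m < c].
  apply: eq_from_tnth => m; rewrite !tnth_mktuple.
  have mc := ltn_ord m.
  rewrite !rX ?bump_lt // /rfun !bumpE; clear e1 E hA rX r; ifs; finish.
by rewrite e1 e0.
Qed.

Lemma Xn_neq0 p : (p < n)%N -> Xn p != 0.
Proof.
move=> pn; apply/eqP => e; have := coef_Xn pn pn; rewrite e mcoeff0 eqxx => /eqP.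
by rewrite eq_sym oner_eq0.
Qed.

Lemma sum_ext k i (cs : {ffun 'I_i -> F}) (G : nat -> R) : (i <= k)%N ->
  \sum_(j < k) ext cs j *: G j = \sum_(j < i) cs j *: G j.
Proof.
move=> ik.
have -> : \sum_(j < i) cs j *: G j = \sum_(j < i) ext cs j *: G j.
  by apply: (@eq_bigr _ _ _ (ordinal i)) => j _; rewrite extE.
rewrite (big_ord_widen k (fun j => ext cs j *: G j) ik).
by rewrite [RHS]big_mkcond; apply: eq_bigr => j _; case: ltnP => // h; rewrite ext_out // scale0r.
Qed.

Lemma symA k b (f : {mpoly F[c]}) i' : (k < n)%N -> (i' < k)%N -> Cond k b f ->
  f \mPo [tuple (if bump i' m == k then Xn i' else Xn (bump i' m)) | m < c]
    = f \mPo [tuple Xn (bump k m) | m < c].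
Proof.
move=> kn ik hC.
have := hC (fun j : 'I_k => if val j == i' then 1 else 0) => /=.
have sum1 : forall G : 'I_k -> R,
    \sum_(j < k) (if val j == i' then 1 else 0) *: G j = G (Ordinal ik).
  move=> G; rewrite (bigD1 (Ordinal ik)) //= eqxx scale1r big1 ?addr0 // => j nj.
  by rewrite ifF ?scale0r //; apply/negbTE; move: nj; rewrite -val_eqE.
rewrite /y_lin !sum1 /=.
have iN : (i' < n)%N by apply: ltn_trans ik kn.
move/(mulfI (expf_neq0 _ (Xn_neq0 iN))).
by rewrite -/(Xn i') fhat_yE // fhatE.
Qed.

Lemma Cond_Delta k b (f : {mpoly F[c]}) : (k < n)%N -> Cond k b f ->
  forall (i : 'I_k.+1) (cs : {ffun 'I_i -> F}), Delta b f cs = 0.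
Proof.
move=> kn hC [i li] /= cs.
case: (ltngtP i k) => [ik|ki|ik]; last first.
- by subst i; exact: (proj1 (Cond_iff b f kn) hC cs).
- by exfalso; lia.
case: i ik li cs => [|i'] ik li cs.
  have q0 : (0 < #|F| ^ b)%N by rewrite expn_gt0 (ltnW q_gt1).
  by rewrite /Delta /w !big_ord0 expr0n eqn0Ngt q0 /= mul0r subr0.
have iN : (i'.+1 < n)%N by apply: ltn_trans ik kn.
have hA := symA kn (ltnW ik) hC.
have := hC (fun j : 'I_k => ext cs j) => /=.
have yE : @y_lin F c k.+1 (fun j => ext cs j) = w cs.
  by rewrite /y_lin (sum_ext cs (fun j => 'X_(inord j)) (ltnW ik)).
rewrite yE.
rewrite (sum_ext cs (fun j => 'X_(inord j) ^+ (#|F| ^ b) * fhat_y k.+1 f (w cs) (inord j)) (ltnW ik)).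
rewrite (sum_ext cs (fun j => 'X_(inord j) ^+ (#|F| ^ b)) (ltnW ik)).
pose g p := if (p < i'.+1)%N then p else if (p < k)%N then p.+1 else if p == k then i'.+1 else p.
pose st := [tuple Xn (g p) | p < n].
have stX : forall p, (p < n)%N -> 'X_(inord p : 'I_n) \mPo st = Xn (g p)
  := fun p h => comp_Xn (fun p => Xn (g p)) h.
have stj : forall j : 'I_i'.+1, 'X_(inord j : 'I_n) \mPo st = 'X_(inord j : 'I_n).
  move=> j; rewrite stX /g ?ltn_ord //; exact: ltn_trans (ltn_ord j) iN.
have wst : w cs \mPo st = w cs.
  rewrite /w raddf_sum; apply: eq_bigr => j _; by rewrite /= comp_mpolyZ /Xn stj.
have L1 : forall j : 'I_i'.+1,
   (cs j *: ('X_(inord j : 'I_n) ^+ (#|F| ^ b) * fhat_y k.+1 f (w cs) (inord j))) \mPo st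
   = cs j *: ('X_(inord j : 'I_n) ^+ (#|F| ^ b) * sub i'.+1 (w cs) (fhat f (inord j))).
  move=> j; have jn : (j < n)%N by exact: ltn_trans (ltn_ord j) iN.
  rewrite comp_mpolyZ rmorphM rmorphXn /= stj; congr (_ *: (_ * _)).
  rewrite fhat_yE // (comp_tup f (fun m => if bump j m == k.+1.-1 then w cs else Xn (bump j m)) st).
  rewrite sub_fhat // -(symB (fun m => if bump j m == i'.+1 then w cs else Xn (bump j m)) kn (ltnW ik) hA).
  congr (comp_mpoly _ _); apply: eq_from_tnth => m; rewrite !tnth_mktuple (fun_if (comp_mpoly st)) wst.
  have mc := ltn_ord m; have jl := ltn_ord j.
  rewrite stX ?bump_lt // /g /mv !bumpE /=; clear -mc jl ik kn; ifs; finish.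
have R1 : forall j : 'I_i'.+1, (cs j *: 'X_(inord j : 'I_n) ^+ (#|F| ^ b)) \mPo st
     = cs j *: 'X_(inord j : 'I_n) ^+ (#|F| ^ b).
  by move=> j; rewrite comp_mpolyZ rmorphXn /= stj.
have R2 : fhat f (inord k) \mPo st = sub i'.+1 (w cs) (fhat f (inord i'.+1)).
  rewrite fhatE // (comp_tup f (fun m => Xn (bump k m)) st) sub_fhat //.
  congr (comp_mpoly _ _); apply: eq_from_tnth => m; rewrite !tnth_mktuple.
  have mc := ltn_ord m.
  rewrite stX ?bump_lt // /g !bumpE /=; clear -mc ik kn; ifs; finish.
move/(congr1 (comp_mpoly st)).
rewrite /= rmorphM /= R2 [X in X = _]raddf_sum [X in _ = X * _]raddf_sum /=.
rewrite (eq_bigr _ (fun j _ => L1 j)) (eq_bigr _ (fun j _ => R1 j)) => E.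
rewrite /Delta.
have -> : (w cs) ^+ (#|F| ^ b) = \sum_(j < i'.+1) cs j *: 'X_(inord j : 'I_n) ^+ (#|F| ^ b).
  by rewrite /w frob_sum.
by rewrite -E subrr.
Qed.


Lemma frac_iff (N L : R) : L != 0 ->
  is_poly_frac (N%:F / L%:F) <-> exists G, N = L * G.
Proof.
move=> nL; split.
  move=> [g hg]; exists g; apply/eqP; rewrite -tofrac_eq tofracM mulrC -hg divfK //.
  by rewrite tofrac_eq0.
move=> [G ->]; exists G; rewrite tofracM [_%:F * G%:F]mulrC mulfK //; by rewrite tofrac_eq0.
Qed.

Lemma main_k k b f : (k < n)%N ->
  is_poly_frac (delta k.+1 b f) <-> Cond k b f.
Proof.
move=> kn; rewrite /delta.
have -> : delta_num k.+1 b f = \det (Dmat k b f) by [].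
have -> : moore_det F c k.+1 = LL k.+1 by [].
rewrite frac_iff ?LL_neq0 //; split.
  move=> [G hG]; apply/(Cond_iff _ _ kn) => cs.
  have := @D_sub k b f ord_max cs kn; rewrite Dop_cof // hG subM LL_root // mul0r.
  move/esym/eqP; rewrite mulf_eq0 (negbTE (LL_neq0 _)) ?orbF ?(ltnW kn) //.
  by move/eqP.
move=> hC; apply: LL_dvd => // i li cs.
have := @D_sub k b f (Ordinal li) cs kn; rewrite /= => ->.
by rewrite (@Cond_Delta k b f kn hC (Ordinal li) cs) mul0r.
Qed.
End Moore.

Theorem mainTheorem9 (F : finFieldType) (c a b : nat) (f : {mpoly F[c]}) :
  (1 <= a)%N -> (a <= c.+1)%N ->
  (is_poly_frac (delta a b f) <->
   (forall cs : 'I_a.-1 -> F,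
      let y := y_lin c cs in
      \sum_(i < a.-1) cs i *: ('X_(inord i : 'I_c.+1) ^+ (#|F| ^ b)
                               * fhat_y a f y (inord i))
      = (\sum_(j < a.-1) cs j *: ('X_(inord j : 'I_c.+1) ^+ (#|F| ^ b)))
        * fhat f (inord a.-1))).
Proof.
case: a => [//|k] _ kn.
exact: (@main_k F c k b f kn).
Qed.
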